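(* For every state $x$ and every round $k\ge 0$, \[ \mathbb{E}\big[\Psi_0(X^k)-\Psi_0(X^{k+1}) \,\big|\, X^k=x\big] \;\ge\; \sum_{\{i,j\}\in E} \frac{\left(1-\frac{2}{\alpha}\right)(\ell_i(x)-\ell_j(x))^2}{\alpha\, d_{ij}\left(\frac{1}{s_i}+\frac{1}{s_j}\right)} \;-\; \frac{n}{\alpha}. \]
   Context: $G=(V,E)$ is an undirected graph on $n$ vertices (processors); $\deg(i)$ is the degree and $d_{ij}=\max\{\deg(i),\deg(j)\}$. Processor $i$ has speed $s_i>0$, scaled so the smallest speed is $1$; $s_{\max}=\max_i s_i$, $\mathcal{S}=\sum_i s_i$. There are $m$ unit tasks; in state $x$, $w_i(x)$ is the number of tasks on $i$ and $\ell_i(x)=w_i(x)/s_i$. $\Psi_0(x)=\sum_i (w_i(x)-m s_i/\mathcal{S})^2/s_i$. Protocol with $\alpha=4s_{\max}$: in each round every task, independently, with $i$ its current processor, chooses a uniformly random neighbor $j$; if $\ell_i-\ell_j>1/s_j$ it moves to $j$ with probability $\frac{\deg(i)}{d_{ij}}\cdot\frac{\ell_i-\ell_j}{\alpha(1/s_i+1/s_j)w_i}$, otherwise stays. $X^k$ denotes the state after $k$ rounds. The sum is over undirected edges, each counted once. *)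

(* Defs.v *)
From HB Require Import structures.
From mathcomp Require Import all_boot all_order all_algebra.
Set Implicit Arguments. Unset Strict Implicit. Unset Printing Implicit Defensive.
Import Order.TTheory GRing.Theory Num.Theory.
Local Open Scope ring_scope.

(* Processors are 'I_n, the graph is a symmetric irreflexive relation e on 'I_n.
   A configuration assigns each of the m unit tasks to a processor. *)
Definition config (n m : nat) := {ffun 'I_m -> 'I_n}.

Section Defs.
Variables (R : realFieldType) (n m : nat) (e : rel 'I_n) (s : 'I_n -> R).

Definition deg (i : 'I_n) : nat := #|[set j | e i j]|.
Definition dij (i j : 'I_n) : nat := maxn (deg i) (deg j).
Definition smax : R := \big[Num.max/0]_(i < n) s i.
Definition Stot : R := \sum_(i < n) s i.
Definition alpha : R := 4 * smax.

Definition wload (x : config n m) (i : 'I_n) : R := (#|[set t | x t == i]|)%:R.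
Definition load (x : config n m) (i : 'I_n) : R := wload x i / s i.
Definition Psi0 (x : config n m) : R :=
  \sum_(i < n) (wload x i - m%:R * s i / Stot) ^+ 2 / s i.

(* Probability that a task currently on i (in state x) moves to j in one round:
   it picks j uniformly among the deg(i) neighbours, and if
   l_i - l_j > 1/s_j it moves with probability
   deg(i)/d_ij * (l_i - l_j) / (alpha (1/s_i + 1/s_j) w_i). *)
Definition pmove (x : config n m) (i j : 'I_n) : R :=
  if e i j && (load x i - load x j > 1 / s j) then
    (1 / (deg i)%:R) *
    ((deg i)%:R / (dij i j)%:R *
     ((load x i - load x j) / (alpha * (1 / s i + 1 / s j) * wload x i)))
  else 0.

Definition ptask (x : config n m) (i j : 'I_n) : R :=
  if j == i then 1 - \sum_(k < n | k != i) pmove x i k else pmove x i j.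

(* Tasks act independently: probability that the next state is y. *)
Definition pnext (x y : config n m) : R := \prod_(t < m) ptask x (x t) (y t).

(* E[ Psi0(X^k) - Psi0(X^{k+1}) | X^k = x ] *)
Definition exp_drop (x : config n m) : R :=
  \sum_(y : config n m) pnext x y * (Psi0 x - Psi0 y).

End Defs.

(* Main.v *)
Require Import Defs.
From HB Require Import structures.
From mathcomp Require Import all_boot all_order all_algebra.
From mathcomp Require Import ring lra.
Set Implicit Arguments. Unset Strict Implicit. Unset Printing Implicit Defensive.
Import Order.TTheory GRing.Theory Num.Theory.
Local Open Scope ring_scope.

Definition Ex (R : realFieldType) (n m : nat) (p : 'I_m -> 'I_n -> R)
  (F : {ffun 'I_m -> 'I_n} -> R) : R :=
  \sum_(y : {ffun 'I_m -> 'I_n}) (\prod_t p t (y t)) * F y.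

Lemma Ex_prod (R : realFieldType) n m (p a : 'I_m -> 'I_n -> R) :
  Ex p (fun y => \prod_t a t (y t)) = \prod_t \sum_j p t j * a t j.
Proof.
rewrite /Ex bigA_distr_bigA; apply: eq_bigr => y _; by rewrite -big_split.
Qed.

Lemma ExD (R : realFieldType) n m (p : 'I_m -> 'I_n -> R) F G :
  Ex p (fun y => F y + G y) = Ex p F + Ex p G.
Proof. by rewrite /Ex -big_split; apply: eq_bigr => y _; rewrite mulrDr. Qed.

Lemma ExZ (R : realFieldType) n m (p : 'I_m -> 'I_n -> R) c F :
  Ex p (fun y => c * F y) = c * Ex p F.
Proof. by rewrite /Ex mulr_sumr; apply: eq_bigr => y _; rewrite mulrCA. Qed.

Lemma ExN (R : realFieldType) n m (p : 'I_m -> 'I_n -> R) F :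
  Ex p (fun y => - F y) = - Ex p F.
Proof. by rewrite /Ex -sumrN; apply: eq_bigr => y _; rewrite mulrN. Qed.

Lemma Ex_sum (R : realFieldType) n m (p : 'I_m -> 'I_n -> R) (I : finType)
  (F : I -> {ffun 'I_m -> 'I_n} -> R) :
  Ex p (fun y => \sum_i F i y) = \sum_i Ex p (F i).
Proof.
rewrite /Ex exchange_big /=; apply: eq_bigr => y _; by rewrite mulr_sumr.
Qed.

Lemma Ex_ext (R : realFieldType) n m (p : 'I_m -> 'I_n -> R) F G :
  (forall y, F y = G y) -> Ex p F = Ex p G.
Proof. by move=> H; apply: eq_bigr => y _; rewrite H. Qed.

Lemma Ex_const (R : realFieldType) n m (p : 'I_m -> 'I_n -> R) c :
  (forall t, \sum_j p t j = 1) -> Ex p (fun _ => c) = c.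
Proof.
move=> H.
have E : Ex p (fun _ => 1) = 1.
  rewrite (@Ex_ext _ _ _ _ _ (fun y => \prod_t (fun _ _ => 1) t (y t))); last first.
    by move=> y; rewrite big1_eq.
  rewrite (Ex_prod p (fun _ _ => 1)) big1 // => t _.
  by under eq_bigr do rewrite mulr1; exact: H.
rewrite -{2}[c]mulr1 -E -ExZ; apply: Ex_ext => y; by rewrite mulr1.
Qed.

Lemma sum_ind (R : realFieldType) n (q : 'I_n -> R) i :
  \sum_j q j * (j == i)%:R = q i.
Proof.
rewrite (bigD1 i) //= eqxx mulr1 big1 ?addr0 // => j /negbTE ->; by rewrite mulr0.
Qed.

Lemma Ex_ind (R : realFieldType) n m (p : 'I_m -> 'I_n -> R) t i :
  (forall t, \sum_j p t j = 1) -> Ex p (fun y => (y t == i)%:R) = p t i.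
Proof.
move=> H.
rewrite (@Ex_ext _ _ _ _ _ (fun y => \prod_v (fun v j => if v == t then (j==i)%:R else 1) v (y v))); last first.
  by move=> y; rewrite (bigD1 t) //= eqxx big1 ?mulr1 // => v /negbTE ->.
rewrite (Ex_prod p (fun v j => if v == t then (j==i)%:R else 1)) (bigD1 t) //= eqxx sum_ind.
rewrite big1 ?mulr1 // => v /negbTE ->.
by under eq_bigr do rewrite mulr1; exact: H.
Qed.

Lemma Ex_ind2 (R : realFieldType) n m (p : 'I_m -> 'I_n -> R) t u i :
  (forall t, \sum_j p t j = 1) ->
  Ex p (fun y => (y t == i)%:R * (y u == i)%:R) = if t == u then p t i else p t i * p u i.
Proof.
move=> H; case: eqP => [<-|/eqP tu].
  rewrite -(Ex_ind t i H); apply: Ex_ext => y.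
  by case: (_ == _); rewrite ?mulr1 ?mulr0.
have ut : u != t by rewrite eq_sym.
pose a v j : R := if v == t then (j==i)%:R else if v == u then (j==i)%:R else 1.
rewrite (@Ex_ext _ _ _ _ _ (fun y => \prod_v a v (y v))); last first.
  move=> y; rewrite (bigD1 t) //= (bigD1 u) /=; last by rewrite eq_sym.
  rewrite /a eqxx (negbTE ut) eqxx big1 ?mulr1 // => v /andP[/negbTE -> /negbTE ->].
  done.
rewrite (Ex_prod p a) (bigD1 t) //= (bigD1 u) /=; last by rewrite eq_sym.
rewrite /a eqxx (negbTE ut) eqxx !sum_ind big1 ?mulr1 //.
move=> v /andP[/negbTE -> /negbTE ->].
by under eq_bigr do rewrite mulr1; exact: H.
Qed.

Lemma Ex_W (R : realFieldType) n m (p : 'I_m -> 'I_n -> R) i :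
  (forall t, \sum_j p t j = 1) ->
  Ex p (fun y => \sum_t (y t == i)%:R) = \sum_t p t i.
Proof.
move=> H; rewrite (Ex_sum p (fun t y => (y t == i)%:R)).
by apply: eq_bigr => t _; rewrite Ex_ind.
Qed.

Lemma Ex_W2 (R : realFieldType) n m (p : 'I_m -> 'I_n -> R) i :
  (forall t, \sum_j p t j = 1) ->
  Ex p (fun y => (\sum_t (y t == i)%:R) ^+ 2) =
  (\sum_t p t i) ^+ 2 + \sum_t (p t i - p t i ^+ 2).
Proof.
move=> H.
rewrite (@Ex_ext _ _ _ _ _ (fun y => \sum_t \sum_u (y t == i)%:R * (y u == i)%:R)); last first.
  by move=> y; rewrite expr2 mulr_suml; apply: eq_bigr => t _; rewrite mulr_sumr.
rewrite (Ex_sum p (fun t y => \sum_u (y t == i)%:R * (y u == i)%:R)).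
rewrite expr2 mulr_suml -big_split /=; apply: eq_bigr => t _.
rewrite (Ex_sum p (fun u y => (y t == i)%:R * (y u == i)%:R)).
rewrite (eq_bigr (fun u => if t == u then p t i else p t i * p u i)); last first.
  by move=> u _; rewrite Ex_ind2.
rewrite mulr_sumr (bigD1 t) //= eqxx [in RHS](bigD1 t) //=.
rewrite (eq_bigr (fun u => p t i * p u i)); last by move=> u /negbTE; rewrite eq_sym => ->.
by rewrite expr2; ring.
Qed.

Lemma wloadE (R : realFieldType) n m (y : config n m) i :
  wload R y i = \sum_t (y t == i)%:R.
Proof.
rewrite /wload -sum1_card natr_sum big_mkcond /=; apply: eq_bigr => t _.
by rewrite inE; case: (_ == _).
Qed.

Lemma group_tasks (R : realFieldType) n m (x : config n m) (F : 'I_n -> R) :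
  \sum_t F (x t) = \sum_a wload R x a * F a.
Proof.
under [RHS]eq_bigr do rewrite wloadE mulr_suml.
rewrite exchange_big /=; apply: eq_bigr => t _.
rewrite -(sum_ind F (x t)); apply: eq_bigr => a _.
by rewrite mulrC eq_sym.
Qed.

Lemma cs_ineq (R : realFieldType) (I : finType) (A : {set I}) (g : I -> R) :
  (\sum_(j in A) g j) ^+ 2 <= #|A|%:R * \sum_(j in A) g j ^+ 2.
Proof.
have H0 : 0 <= \sum_(j in A) \sum_(k in A) (g j - g k) ^+ 2.
  by apply: sumr_ge0 => j _; apply: sumr_ge0 => k _; apply: sqr_ge0.
have E : \sum_(j in A) \sum_(k in A) (g j - g k) ^+ 2 =
   2 * (#|A|%:R * \sum_(j in A) g j ^+ 2) - 2 * (\sum_(j in A) g j) ^+ 2.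
  rewrite (eq_bigr (fun j => #|A|%:R * (g j ^+2) + \sum_(k in A) g k ^+ 2 -
                 2 * (g j * \sum_(k in A) g k))); last first.
    move=> j _; rewrite !mulr_sumr.
    rewrite (mulr_natl (g j ^+ 2) #|A|) -sumr_const -big_split /= -sumrB.
    by apply: eq_bigr => k _; ring.
  rewrite sumrB big_split /= -mulr_sumr sumr_const -mulr_sumr -mulr_suml.
  rewrite -(mulr_natl (\sum_(i in A) g i ^+ 2) #|A|).
  set X := \sum_(i in A) g i ^+ 2; set Y := \sum_(i in A) g i.
  ring.
move: H0; rewrite E.
set X := \sum_(i in A) g i ^+ 2; set Y := (\sum_(i in A) g i) ^+ 2.
set Z := #|A|%:R * X.
move=> H0; rewrite -subr_ge0.
have -> : Z - Y = (2 * Z - 2 * Y) / 2 by field.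
by apply: divr_ge0.
Qed.

Lemma sum_restrict (R : realFieldType) (I : finType) (A : {set I}) (h : I -> R) :
  (forall j, j \notin A -> h j = 0) -> \sum_j h j = \sum_(j in A) h j.
Proof.
move=> H; rewrite [RHS]big_mkcond; apply: eq_bigr => j _.
by case: ifP => // /negbT /H.
Qed.

Lemma sym_split (R : realFieldType) n (e : rel 'I_n) (h : 'I_n -> 'I_n -> R) :
  symmetric e -> irreflexive e ->
  \sum_i \sum_(j | e i j) h i j = \sum_i \sum_(j | e i j && (i < j)%N) (h i j + h j i).
Proof.
move=> sym irr.
rewrite (eq_bigr (fun i => \sum_(j | e i j && (i < j)%N) h i j + \sum_(j | e i j && ~~ (i < j)%N) h i j)); last first.
  by move=> i _; rewrite (bigID (fun j : 'I_n => (i < j)%N)).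
under [RHS]eq_bigr do rewrite big_split /=.
rewrite big_split [RHS]big_split /=; congr (_ + _).
rewrite [RHS](eq_bigr (fun i => \sum_j (if e i j && (i < j)%N then h j i else 0))); last first.
  by move=> i _; rewrite big_mkcond.
rewrite exchange_big /=; apply: eq_bigr => i _.
rewrite big_mkcond; apply: eq_bigr => j _.
case E: (e i j) => /=; last by rewrite sym E.
rewrite sym E /=.
have nij : i != j by apply/eqP => ij; move: E; rewrite ij irr.
rewrite -leqNgt leq_eqVlt.
have -> : (j == i :> nat) = false by apply/negbTE; rewrite eq_sym; exact: nij.
done.
Qed.

Definition Qp (R : realFieldType) (f D d u : R) := 2 * f * D - f ^+ 2 * (d * u) - f * u.

Lemma active_ineq (R : realFieldType) (al d u D : R) :
  4 <= al -> 1 <= d -> 0 < u -> u <= 2 ->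
  (1 - 2 / al) * D ^+ 2 / (al * d * u) - 2 / (al * d)
   <= Qp (D / (al * d * u)) D d u.
Proof.
move=> hal hd hu hu2.
have al0 : al != 0 by apply/eqP => h; rewrite h in hal; lra.
have d0 : d != 0 by apply/eqP => h; rewrite h in hd; lra.
have u0 : u != 0 by apply/eqP => h; rewrite h in hu; lra.
rewrite -subr_ge0.
have -> : Qp (D / (al * d * u)) D d u - ((1 - 2 / al) * D ^+ 2 / (al * d * u) - 2 / (al * d))
  = (1 / (al * d)) * ((D - u / 2) ^+ 2 / u + D ^+ 2 / (al * u) + (2 - u / 4)).
  by rewrite /Qp; field; rewrite ?al0 ?d0 ?u0.
apply: mulr_ge0.
  by apply: divr_ge0; [lra| apply: mulr_ge0; lra].
apply: addr_ge0; [apply: addr_ge0|]; last by lra.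
  by apply: divr_ge0; [apply: sqr_ge0 | lra].
by apply: divr_ge0; [apply: sqr_ge0 | apply: mulr_ge0; lra].
Qed.

Lemma Qp0 (R : realFieldType) (D d u : R) : Qp 0 D d u = 0.
Proof. by rewrite /Qp; ring. Qed.

Lemma pair_ineq (R : realFieldType) (al d a b li lj fij fji : R) :
 4 <= al -> 1 <= d -> 0 < a -> a <= 1 -> 0 < b -> b <= 1 ->
 (b < li - lj -> fij = (li - lj) / (al * d * (a + b))) -> (~~ (b < li - lj) -> fij = 0) ->
 (a < lj - li -> fji = (lj - li) / (al * d * (b + a))) -> (~~ (a < lj - li) -> fji = 0) ->
 (1 - 2 / al) * (li - lj) ^+ 2 / (al * d * (a + b)) - 2 / (al * d)
   <= Qp fij (li - lj) d (a + b) + Qp fji (lj - li) d (b + a).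
Proof.
move=> hal hd ha ha1 hb hb1 f1 f2 g1 g2.
have al0 : al != 0 by apply/eqP => h; rewrite h in hal; lra.
have d0 : d != 0 by apply/eqP => h; rewrite h in hd; lra.
have u0 : a + b != 0 by apply/eqP => h; lra.
case: (boolP (b < li - lj)) => H1.
  have H2 : ~~ (a < lj - li) by rewrite -leNgt; lra.
  rewrite (f1 H1) (g2 H2) Qp0 addr0.
  by apply: active_ineq => //; lra.
case: (boolP (a < lj - li)) => H2.
  rewrite (f2 H1) (g1 H2) Qp0 add0r.
  have -> : (li - lj) ^+ 2 = (lj - li) ^+ 2 by ring.
  rewrite (addrC a b); apply: active_ineq => //; lra.
rewrite (f2 H1) (g2 H2) !Qp0 addr0.
move: H1 H2; rewrite -!leNgt => H1 H2.
have hD : (li - lj) ^+ 2 <= a + b by rewrite expr2; nra.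
rewrite subr_le0.
have -> : (1 - 2 / al) * (li - lj) ^+ 2 / (al * d * (a + b)) =
   ((1 - 2 / al) * ((li - lj) ^+ 2 / (a + b))) / (al * d) by field; rewrite ?al0 ?d0 ?u0.
have ald : 0 < al * d by apply: mulr_gt0; lra.
rewrite ler_pM2r ?invr_gt0 //.
have h1 : 0 <= 1 - 2 / al <= 1.
  apply/andP; split; last by rewrite lerBlDr lerDl; apply: divr_ge0; lra.
  rewrite subr_ge0 ler_pdivrMr; lra.
have h2 : 0 <= (li - lj) ^+ 2 / (a + b) <= 1.
  apply/andP; split; first by apply: divr_ge0; [apply: sqr_ge0|lra].
  by rewrite ler_pdivrMr; lra.
case/andP: h1 => h1 h1'; case/andP: h2 => h2 h2'.
nra.
Qed.

Lemma ptask_sum (R : realFieldType) n m (e : rel 'I_n) (s : 'I_n -> R) (x : config n m) a :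
  \sum_j ptask e s x a j = 1.
Proof.
rewrite (bigD1 a) //= /ptask eqxx.
rewrite (eq_bigr (fun j => pmove e s x a j)); last by move=> j /negbTE ->.
by rewrite subrK.
Qed.

Lemma drop_exact (R : realFieldType) n m (e : rel 'I_n) (s : 'I_n -> R) (x : config n m) :
  (forall i, 0 < s i) ->
  let p := fun t j => ptask e s x (x t) j in
  let c := fun i => m%:R * s i / Stot s in
  exp_drop e s x = \sum_i ((wload R x i - c i) ^+ 2 -
     ((\sum_t p t i - c i) ^+ 2 + \sum_t (p t i - p t i ^+ 2))) / s i.
Proof.
move=> spos p c.
have H : forall t, \sum_j p t j = 1 by move=> t; exact: ptask_sum.
have -> : exp_drop e s x = Ex p (fun y => Psi0 s x + - Psi0 s y) by [].
rewrite (ExD p (fun _ => Psi0 s x) (fun y => - Psi0 s y)) Ex_const // ExN.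
pose G (i : 'I_n) (y : {ffun 'I_m -> 'I_n}) : R := (1 / s i) * (\sum_t (y t == i)%:R) ^+ 2 +
      ((- 2 * c i / s i) * (\sum_t (y t == i)%:R) + c i ^+ 2 / s i).
rewrite (@Ex_ext _ _ _ p _ (fun y => \sum_i G i y)); last first.
  move=> y; rewrite /Psi0; apply: eq_bigr => i _; rewrite wloadE /G.
  change (m%:R * s i / Stot s) with (c i).
  have si0 : s i != 0 by rewrite gt_eqF.
  set W := \sum_t _; field; exact: si0.
rewrite (Ex_sum p G) /Psi0 -sumrB; apply: eq_bigr => i _.
rewrite /G (ExD p (fun y => 1 / s i * (\sum_t (y t == i)%:R) ^+ 2)
   (fun y => -2 * c i / s i * \sum_t (y t == i)%:R + c i ^+ 2 / s i)).
rewrite (ExZ p (1 / s i) (fun y => (\sum_t (y t == i)%:R) ^+ 2)).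
rewrite (ExD p (fun y => -2 * c i / s i * \sum_t (y t == i)%:R) (fun y => c i ^+ 2 / s i)).
rewrite (ExZ p (-2 * c i / s i) (fun y => \sum_t (y t == i)%:R)).
rewrite Ex_const // Ex_W2 // Ex_W //.
change (m%:R * s i / Stot s) with (c i).
have si0 : s i != 0 by rewrite gt_eqF.
field; exact: si0.
Qed.

Lemma pmove_ne (R : realFieldType) n m (e : rel 'I_n) (s : 'I_n -> R) (x : config n m) a k :
  ~~ e a k -> pmove e s x a k = 0.
Proof. by move/negbTE => h; rewrite /pmove h. Qed.

Lemma wload_ge0 (R : realFieldType) n m (x : config n m) a : 0 <= wload R x a.
Proof. by rewrite /wload ler0n. Qed.

Lemma mu_expand (R : realFieldType) n m (e : rel 'I_n) (s : 'I_n -> R) (x : config n m) i :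
  irreflexive e ->
  \sum_t ptask e s x (x t) i =
    wload R x i - \sum_k wload R x i * pmove e s x i k + \sum_a wload R x a * pmove e s x a i.
Proof.
move=> irr.
have pii : pmove e s x i i = 0 by apply: pmove_ne; rewrite irr.
rewrite (group_tasks x (fun a => ptask e s x a i)) (bigD1 i) //= /ptask eqxx.
have E1 : \sum_(a | a != i) wload R x a * (if i == a then 1 - \sum_(k | k != a) pmove e s x a k
     else pmove e s x a i) = \sum_a wload R x a * pmove e s x a i.
  rewrite [RHS](bigD1 i) //= pii mulr0 add0r; apply: eq_bigr => a.
  by rewrite eq_sym => /negbTE ->.
have E2 : \sum_(k | k != i) pmove e s x i k = \sum_k pmove e s x i k.
  by rewrite [RHS](bigD1 i) //= pii add0r.
by rewrite E1 E2 mulrBr mulr1 mulr_sumr.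
Qed.

Lemma V_bound (R : realFieldType) n m (e : rel 'I_n) (s : 'I_n -> R) (x : config n m) i :
  irreflexive e ->
  \sum_t (ptask e s x (x t) i - ptask e s x (x t) i ^+ 2) <=
    \sum_k wload R x i * pmove e s x i k + \sum_a wload R x a * pmove e s x a i.
Proof.
move=> irr.
have pii : pmove e s x i i = 0 by apply: pmove_ne; rewrite irr.
rewrite (group_tasks x (fun a => ptask e s x a i - ptask e s x a i ^+ 2)) (bigD1 i) //= /ptask eqxx.
have E2 : \sum_(k | k != i) pmove e s x i k = \sum_k pmove e s x i k.
  by rewrite [RHS](bigD1 i) //= pii add0r.
rewrite E2 -mulr_sumr.
have E1 : \sum_a wload R x a * pmove e s x a i = \sum_(a | a != i) wload R x a * pmove e s x a i.
  by rewrite (bigD1 i) //= pii mulr0 add0r.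
rewrite E1; apply: lerD.
  apply: ler_wpM2l; first exact: wload_ge0.
  set S := \sum_k _.
  have := sqr_ge0 S; lra.
apply: ler_sum => a; rewrite eq_sym => /negbTE ->; apply: ler_wpM2l; first exact: wload_ge0.
have := sqr_ge0 (pmove e s x a i); lra.
Qed.

Lemma f_inactive (R : realFieldType) n m (e : rel 'I_n) (s : 'I_n -> R) (x : config n m) a k :
  ~~ (1 / s k < load s x a - load s x k) -> wload R x a * pmove e s x a k = 0.
Proof. by move=> h; rewrite /pmove (negbTE h) andbF mulr0. Qed.

Lemma f_ge0 (R : realFieldType) n m (e : rel 'I_n) (s : 'I_n -> R) (x : config n m) a k :
  (forall i, 0 < s i) -> 0 < alpha s -> 0 <= wload R x a * pmove e s x a k.
Proof.
move=> spos hal; apply: mulr_ge0; first exact: wload_ge0.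
rewrite /pmove; case: ifP => // /andP[_ h].
have hs := spos k; have hsa := spos a.
have hk : 0 < 1 / s k by rewrite divr_gt0.
have ha : 0 < 1 / s a by rewrite divr_gt0.
apply: mulr_ge0; first by rewrite divr_ge0 ?ler0n.
apply: mulr_ge0; first by rewrite divr_ge0 ?ler0n.
apply: divr_ge0; first lra.
apply: mulr_ge0; last exact: wload_ge0.
apply: mulr_ge0; lra.
Qed.

Lemma f_active (R : realFieldType) n m (e : rel 'I_n) (s : 'I_n -> R) (x : config n m) a k :
  (forall i, 0 < s i) -> 0 < alpha s -> e a k ->
  1 / s k < load s x a - load s x k ->
  wload R x a * pmove e s x a k =
   (load s x a - load s x k) / (alpha s * (dij e a k)%:R * (1 / s a + 1 / s k)).
Proof.
move=> spos hal eak h.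
have hs := spos k; have hsa := spos a.
have hk : 0 < 1 / s k by rewrite divr_gt0.
have ha : 0 < 1 / s a by rewrite divr_gt0.
have lk : 0 <= load s x k by rewrite /load divr_ge0 ?wload_ge0 // ltW.
have w0 : wload R x a != 0.
  apply/eqP => w0; move: h lk; rewrite /load w0 mul0r; lra.
have dg : (0 < deg e a)%N by apply/card_gt0P; exists k; rewrite inE.
have dd : (0 < dij e a k)%N by rewrite /dij (leq_trans dg) ?leq_maxl.
have dg0 : (deg e a)%:R != 0 :> R by rewrite pnatr_eq0 -lt0n.
have dd0 : (dij e a k)%:R != 0 :> R by rewrite pnatr_eq0 -lt0n.
have al0 : alpha s != 0 by rewrite gt_eqF.
have u0 : 1 / s a + 1 / s k != 0 by rewrite gt_eqF //; lra.
rewrite /pmove eak h /=.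
field.
have sks : s k + s a != 0 by rewrite gt_eqF //; lra.
by rewrite (gt_eqF hs) (gt_eqF hsa) sks dd0 al0 dg0 andbT /=; exact: w0.
Qed.

Definition fl (R : realFieldType) n m (e : rel 'I_n) (s : 'I_n -> R) (x : config n m) a k :=
  wload R x a * pmove e s x a k.

Lemma D2_bound (R : realFieldType) n m (e : rel 'I_n) (s : 'I_n -> R) (x : config n m) :
  symmetric e -> (forall i, 0 < s i) -> 0 < alpha s ->
  \sum_i (\sum_a fl e s x a i - \sum_k fl e s x i k) ^+ 2 / s i <=
  \sum_i \sum_j fl e s x i j ^+ 2 * ((dij e i j)%:R * (1 / s i + 1 / s j)).
Proof.
move=> sym spos hal.
set f := fl e s x.
have f0 : forall a k, 0 <= f a k by move=> a k; exact: f_ge0.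
have fne : forall a k, ~~ e a k -> f a k = 0.
  by move=> a k h; rewrite /f /fl pmove_ne ?mulr0.
have step1 : forall i, (\sum_a f a i - \sum_k f i k) ^+ 2 / s i <=
    ((deg e i)%:R / s i) * \sum_j (f j i ^+ 2 + f i j ^+ 2).
  move=> i; rewrite -sumrB.
  pose A := [set j | e i j].
  have eA : forall j, j \notin A -> ~~ e i j by move=> j; rewrite inE.
have E1 : \sum_j (f j i - f i j) = \sum_(j in A) (f j i - f i j).
    apply: sum_restrict => j /eA h.
    by rewrite (fne i j h) (fne j i) ?subr0 // sym.
  have E2 : \sum_j (f j i ^+ 2 + f i j ^+ 2) = \sum_(j in A) (f j i ^+ 2 + f i j ^+ 2).
    apply: sum_restrict => j /eA h.
    by rewrite (fne i j h) (fne j i) ?expr0n ?addr0 // sym.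
  rewrite E1 E2 [X in _ <= X]mulrAC; apply: ler_wpM2r; first by rewrite invr_ge0 ltW.
  apply: (le_trans (cs_ineq A _)); rewrite /deg -/A.
  apply: ler_wpM2l; first by rewrite ler0n.
  apply: ler_sum => j _; have := f0 j i; have := f0 i j.
  set u := f j i; set v := f i j; move=> hv hu.
  have -> : (u - v) ^+ 2 = u ^+ 2 + v ^+ 2 - 2 * (u * v) by ring.
  rewrite lerBlDr lerDl; apply: mulr_ge0 => //; exact: mulr_ge0.
apply: le_trans; first by apply: ler_sum => i _; exact: step1.
pose c i := (deg e i)%:R / s i.
have E : \sum_i c i * \sum_j (f j i ^+ 2 + f i j ^+ 2) =
    \sum_i \sum_j f i j ^+ 2 * (c i + c j).
  rewrite (eq_bigr (fun i => \sum_j c i * f j i ^+ 2 + \sum_j c i * f i j ^+ 2)); last first.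
    by move=> i _; rewrite mulr_sumr -big_split /=; apply: eq_bigr => j _; rewrite mulrDr.
  rewrite big_split /= exchange_big /= -big_split /=; apply: eq_bigr => i _.
  rewrite -big_split /=; apply: eq_bigr => j _; ring.
rewrite E; apply: ler_sum => i _; apply: ler_sum => j _.
apply: ler_wpM2l; first exact: sqr_ge0.
rewrite mulrDr /c; apply: lerD.
  rewrite mulrA mulr1; apply: ler_wpM2r; first by rewrite invr_ge0 ltW.
  by rewrite ler_nat /dij leq_maxl.
rewrite mulrA mulr1; apply: ler_wpM2r; first by rewrite invr_ge0 ltW.
by rewrite ler_nat /dij leq_maxr.
Qed.
Lemma drop_lb (R : realFieldType) n m (e : rel 'I_n) (s : 'I_n -> R) (x : config n m) :
  symmetric e -> irreflexive e -> (forall i, 0 < s i) -> 0 < alpha s ->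
  \sum_i \sum_j Qp (fl e s x i j) (load s x i - load s x j) (dij e i j)%:R (1 / s i + 1 / s j)
   <= exp_drop e s x.
Proof.
move=> sym irr spos hal.
rewrite drop_exact //.
set f := fl e s x.
set Si := (Stot s)^-1.
pose l i := load s x i.
pose K := m%:R * Si.
pose Dl i := \sum_a f a i - \sum_k f i k.
pose B i := \sum_k f i k + \sum_a f a i.
have key : forall i, -2 * (l i - K) * Dl i - Dl i ^+ 2 / s i - B i / s i <=
   ((wload R x i - m%:R * s i / Stot s) ^+ 2 -
     ((\sum_t ptask e s x (x t) i - m%:R * s i / Stot s) ^+ 2 +
      \sum_t (ptask e s x (x t) i - ptask e s x (x t) i ^+ 2))) / s i.
  move=> i.
  have mu : \sum_t ptask e s x (x t) i = wload R x i - \sum_k f i k + \sum_a f a i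
    := mu_expand s x i irr.
  have hV : \sum_t (ptask e s x (x t) i - ptask e s x (x t) i ^+ 2) <= B i
    := V_bound s x i irr.
  rewrite mu; move: hV; set V := \sum_t _.
  rewrite /B /Dl /l /K /load -/Si.
  set o := \sum_k f i k; set a := \sum_a f a i; set w := wload R x i.
  have si := spos i; have si0 : s i != 0 by rewrite gt_eqF.
  move=> hV; rewrite -subr_ge0.
  have -> : ((w - m%:R * s i * Si) ^+ 2 - ((w - o + a - m%:R * s i * Si) ^+ 2 + V)) / s i -
      (-2 * (w / s i - m%:R * Si) * (a - o) - (a - o) ^+ 2 / s i - (o + a) / s i)
      = ((o + a) - V) / s i by field.
  by apply: divr_ge0; lra.
apply: le_trans; last by apply: ler_sum => i _; exact: key i.
have S0 : \sum_i Dl i = 0 by rewrite /Dl sumrB exchange_big subrr.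
have S1 : \sum_i l i * Dl i = \sum_i \sum_j f i j * (l j - l i).
  rewrite /Dl (eq_bigr (fun i => \sum_a l i * f a i - \sum_k l i * f i k)); last first.
    by move=> i _; rewrite mulrBr !mulr_sumr.
  rewrite sumrB exchange_big /= -sumrB; apply: eq_bigr => i _.
  rewrite -sumrB; apply: eq_bigr => j _; ring.
have I1 : \sum_i (-2 * (l i - K) * Dl i) = \sum_i \sum_j 2 * f i j * (l i - l j).
  rewrite (eq_bigr (fun i => -2 * (l i * Dl i) + 2 * K * Dl i)); last by move=> i _; ring.
  rewrite big_split /= -!mulr_sumr S0 S1 mulr0 addr0 mulr_sumr; apply: eq_bigr => i _.
  rewrite mulr_sumr; apply: eq_bigr => j _; ring.
have I3 : \sum_i B i / s i = \sum_i \sum_j f i j * (1 / s i + 1 / s j).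
  rewrite /B (eq_bigr (fun i => \sum_k f i k / s i + \sum_a f a i / s i)); last first.
    by move=> i _; rewrite mulrDl !mulr_suml.
  rewrite big_split /= [X in _ + X]exchange_big /= -big_split /=; apply: eq_bigr => i _.
  rewrite -big_split /=; apply: eq_bigr => j _; rewrite /=; ring.
have D2 := D2_bound x sym spos hal.
have EQ : \sum_i \sum_j Qp (f i j) (load s x i - load s x j) (dij e i j)%:R (1 / s i + 1 / s j)
   = \sum_i \sum_j 2 * f i j * (l i - l j)
     - \sum_i \sum_j f i j ^+ 2 * ((dij e i j)%:R * (1 / s i + 1 / s j))
     - \sum_i \sum_j f i j * (1 / s i + 1 / s j).
  rewrite -!sumrB; apply: eq_bigr => i _; rewrite -!sumrB; apply: eq_bigr => j _.
  by rewrite /Qp.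
rewrite !sumrB I1 I3 EQ.
move: D2; rewrite -/f -/Dl.
set X1 := \sum_i \sum_j 2 * f i j * (l i - l j).
set X2 := \sum_i \sum_j f i j ^+ 2 * _.
set X3 := \sum_i \sum_j f i j * _.
set X4 := \sum_i Dl i ^+ 2 / s i.
lra.
Qed.


Theorem lemma12 (R : realFieldType) (n m : nat) (e : rel 'I_n) (s : 'I_n -> R) :
  symmetric e -> irreflexive e ->
  (forall i, 1 <= s i) -> (exists i, s i = 1) ->
  forall x : config n m,
    \sum_(i < n) \sum_(j < n | e i j && (i < j)%N)
        ((1 - 2 / alpha s) * (load s x i - load s x j) ^+ 2 /
         (alpha s * (dij e i j)%:R * (1 / s i + 1 / s j)))
      - n%:R / alpha s
    <= exp_drop e s x.
Proof.
move=> sym irr s1 [i0 si0] x.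
have spos : forall i, 0 < s i by move=> i; have := s1 i; lra.
have smaxge : forall i, s i <= smax s.
  by move=> i; rewrite /smax; exact: le_bigmax.
have hal : 4 <= alpha s by rewrite /alpha; have := smaxge i0; rewrite si0; lra.
have hal0 : 0 < alpha s by lra.
have hsm : 0 < smax s by have := smaxge i0; rewrite si0; lra.
have dsym : forall i j, dij e i j = dij e j i by move=> i j; rewrite /dij maxnC.
apply: le_trans (drop_lb x sym irr spos hal0).
set f := fl e s x.
pose Q i j := Qp (f i j) (load s x i - load s x j) (dij e i j)%:R (1 / s i + 1 / s j).
have E1 : \sum_i \sum_j Q i j = \sum_i \sum_(j | e i j) Q i j.
  apply: eq_bigr => i _; rewrite [RHS]big_mkcond; apply: eq_bigr => j _.
  case: ifP => // /negbT h; by rewrite /Q /f /fl pmove_ne // mulr0 Qp0.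
rewrite E1 (sym_split Q sym irr).
pose h i j : R := 1 / (alpha s * (dij e i j)%:R).
have Hb : \sum_i \sum_(j | e i j && (i < j)%N) (h i j + h j i) <= n%:R / alpha s.
  rewrite -(sym_split h sym irr).
  have -> : n%:R / alpha s = \sum_(i < n) (1 / alpha s).
    by rewrite sumr_const card_ord -[RHS]mulr_natl div1r.
  apply: ler_sum => i _.
  rewrite (eq_bigl (fun j => j \in [set j | e i j])); last by move=> j; rewrite inE.
  apply: le_trans (_ : \sum_(j in [set j | e i j]) (1 / (alpha s * (deg e i)%:R)) <= _).
    apply: ler_sum => j; rewrite inE => eij.
    have dg : (0 < deg e i)%N by apply/card_gt0P; exists j; rewrite inE.
    have dd : (deg e i <= dij e i j)%N by rewrite /dij leq_maxl.
    rewrite /h !div1r lef_pV2 ?posrE ?mulr_gt0 ?ltr0n //. all: try (by apply: ler_wpM2l; [lra | rewrite ler_nat]).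
    all: try exact: hsm.
    all: try exact: leq_trans dg dd.
  rewrite sumr_const -/(deg e i).
  case: (posnP (deg e i)) => [->|dg]; first by rewrite mulr0n; apply: divr_ge0; lra.
  rewrite -mulr_natl.
  have dg0 : (deg e i)%:R != 0 :> R by rewrite pnatr_eq0 -lt0n.
  have al0 : alpha s != 0 by rewrite gt_eqF.
  by rewrite [X in X <= _](_ : _ = 1 / alpha s) //; field; rewrite dg0 al0.
apply: le_trans (lerB (lexx _) Hb) _.
rewrite -sumrB; apply: ler_sum => i _; rewrite -sumrB; apply: ler_sum => j /andP[eij _].
rewrite /Q /h (dsym j i).
have hi := s1 i; have hj := s1 j.
have dg : (0 < deg e i)%N by apply/card_gt0P; exists j; rewrite inE.
have dd : (1 <= dij e i j)%N by rewrite /dij (leq_trans dg) ?leq_maxl.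
have -> : 1 / (alpha s * (dij e i j)%:R) + 1 / (alpha s * (dij e i j)%:R) =
   2 / (alpha s * (dij e i j)%:R) by rewrite -mulrDl.
apply: pair_ineq => //.
- by rewrite ler1n.
- by rewrite divr_gt0.
- by rewrite ler_pdivrMr ?spos // mul1r.
- by rewrite divr_gt0.
- by rewrite ler_pdivrMr ?spos // mul1r.
- by move=> h1; rewrite /f /fl (f_active spos hal0 eij h1).
- by move=> h1; rewrite /f /fl (f_inactive e h1).
- move=> h1; rewrite /f /fl (f_active spos hal0 (_ : e j i) h1) ?(dsym j i) //; by rewrite sym.
- by move=> h1; rewrite /f /fl (f_inactive e h1).
Qed.
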